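(* Let $\langle C_\delta:\delta\in\mathrm{Lim}\rangle$ be a $\clubsuit$-sequence and define $\mathrm{Lim}_n$ and $C^n_\delta$ as below. Then for every $n\in\omega$ and every uncountable $S\subseteq\omega_1$, the set $\{\delta\in\mathrm{Lim}_n: C^n_\delta\subseteq S\}$ is stationary in $\omega_1$.
   Context: $\mathrm{Lim}$ is the set of nonzero countable limit ordinals. A $\clubsuit$-sequence is a sequence $\langle C_\delta:\delta\in\mathrm{Lim}\rangle$ with $C_\delta\subseteq\delta$ of order type $\omega$, $\sup C_\delta=\delta$, such that for every uncountable $S\subseteq\omega_1$ the set $\{\delta\in\mathrm{Lim}:C_\delta\subseteq S\}$ is stationary. Define $\mathrm{Lim}_0=\mathrm{Lim}$, $\mathrm{Lim}_{n+1}=\{\delta\in\mathrm{Lim}:C_\delta\subseteq\mathrm{Lim}_n\}$; $C^0_\delta=C_\delta$ for $\delta\in\mathrm{Lim}_0$, and $C^{n+1}_\delta=\bigcup_{\xi\in C_\delta}C^n_\xi$ for $\delta\in\mathrm{Lim}_{n+1}$. *)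

(* Defs.v *)
(* omega_1 is modelled abstractly as a type T with a strict
   relation lt that is a well-order, in which every proper initial segment is
   countable and which is itself uncountable.  Such an order is (up to unique
   isomorphism) exactly (omega_1, <). *)
From Stdlib Require Import Relations Wellfounded.

Section Omega1.
Context {T : Type} (lt : T -> T -> Prop).

Definition countable_set (A : T -> Prop) : Prop :=
  exists f : T -> nat, forall x y, A x -> A y -> f x = f y -> x = y.

Definition uncountable_set (A : T -> Prop) : Prop := ~ countable_set A.

Definition is_omega1 : Prop :=
  (forall x, ~ lt x x) /\
  (forall x y z, lt x y -> lt y z -> lt x z) /\
  (forall x y, lt x y \/ x = y \/ lt y x) /\
  well_founded lt /\
  (forall x, countable_set (fun y => lt y x)) /\
  uncountable_set (fun _ => True).

Definition subset (A B : T -> Prop) : Prop := forall x, A x -> B x.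

(* nonzero limit ordinal *)
Definition is_lim (d : T) : Prop :=
  (exists y, lt y d) /\ (forall y, lt y d -> exists z, lt y z /\ lt z d).

Definition unbounded (C : T -> Prop) : Prop :=
  forall x, exists y, lt x y /\ C y.

Definition closed (C : T -> Prop) : Prop :=
  forall d, is_lim d ->
    (forall y, lt y d -> exists z, lt y z /\ lt z d /\ C z) -> C d.

Definition club (C : T -> Prop) : Prop := closed C /\ unbounded C.

Definition stationary (S : T -> Prop) : Prop :=
  forall C, club C -> exists x, C x /\ S x.

Definition ladder (d : T) (A : T -> Prop) : Prop :=
  exists f : nat -> T,
    (forall n, lt (f n) (f (S n))) /\
    (forall x, A x <-> exists n, f n = x) /\
    (forall n, lt (f n) d) /\
    (forall y, lt y d -> exists n, lt y (f n)).

(* clubsuit-sequence: the value of C at non-limits is irrelevant *)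
Definition clubsuit_seq (C : T -> T -> Prop) : Prop :=
  (forall d, is_lim d -> ladder d (C d)) /\
  (forall S, uncountable_set S ->
     stationary (fun d => is_lim d /\ subset (C d) S)).

Fixpoint LimN (C : T -> T -> Prop) (n : nat) (d : T) : Prop :=
  match n with
  | O => is_lim d
  | S m => is_lim d /\ subset (C d) (LimN C m)
  end.

Fixpoint CN (C : T -> T -> Prop) (n : nat) (d : T) : T -> Prop :=
  match n with
  | O => C d
  | S m => fun x => exists xi, C d xi /\ CN C m xi x
  end.

End Omega1.

(* Main.v *)
Require Import Defs.
From Stdlib Require Import Classical ClassicalEpsilon Cantor.

Section Aux.
Context {T : Type} (lt : T -> T -> Prop) (H : is_omega1 lt).

Lemma seg_le_countable s : countable_set (fun y => lt y s \/ y = s).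
Proof.
  destruct H as (_ & _ & _ & _ & Hseg & _).
  destruct (Hseg s) as [h Hh].
  exists (fun y => if excluded_middle_informative (y = s) then 0 else S (h y)).
  intros x y Hx Hy E.
  destruct (excluded_middle_informative (x = s)), (excluded_middle_informative (y = s)).
  - congruence.
  - discriminate.
  - discriminate.
  - injection E; intro E'. apply Hh; auto.
    + destruct Hx; [assumption|contradiction].
    + destruct Hy; [assumption|contradiction].
Qed.

Lemma above m : exists y, lt m y.
Proof.
  destruct H as (_ & _ & Htri & _ & _ & Hunc).
  apply NNPP; intro N.
  apply Hunc.
  destruct (seg_le_countable m) as [g Hg].
  exists g. intros x y _ _ E. apply Hg; auto.
  - destruct (Htri x m) as [|[|]]; auto. exfalso; apply N; eauto.
  - destruct (Htri y m) as [|[|]]; auto. exfalso; apply N; eauto.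
Qed.

Lemma stat_unc S' : stationary lt S' -> uncountable_set S'.
Proof.
  intros Hst [f Hf].
  pose proof H as (Hirr & Htr & Htri & _ & _ & Hunc).
  set (U := fun y => exists s, S' s /\ (lt y s \/ y = s)).
  assert (HU : countable_set U).
  { set (hs := fun s => epsilon (inhabits (fun _ : T => 0))
        (fun h => forall x y, (lt x s \/ x = s) -> (lt y s \/ y = s) -> h x = h y -> x = y)).
    assert (Hhs : forall s x y, (lt x s \/ x = s) -> (lt y s \/ y = s) -> hs s x = hs s y -> x = y).
    { intro s. unfold hs. apply epsilon_spec. apply seg_le_countable. }
    set (sel := fun y => epsilon (inhabits y) (fun s => S' s /\ (lt y s \/ y = s))).
    exists (fun y => to_nat (f (sel y), hs (sel y) y)).
    intros x y Hx Hy E.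
    assert (Sx := epsilon_spec (inhabits x) _ Hx).
    assert (Sy := epsilon_spec (inhabits y) _ Hy).
    fold (sel x) in Sx. fold (sel y) in Sy.
    assert (E2 := f_equal of_nat E). rewrite !cancel_of_to in E2.
    injection E2; intros E3 E4.
    assert (Es : sel x = sel y) by (apply Hf; [apply Sx|apply Sy|congruence]).
    rewrite Es in E3, E4, Sx.
    apply (Hhs (sel y)); [apply Sx|apply Sy|congruence]. }
  assert (Hb : exists b, ~ U b).
  { apply NNPP; intro N. apply Hunc. destruct HU as [g Hg].
    exists g; intros x y _ _ E. apply Hg; auto.
    - apply NNPP; intro; apply N; eauto.
    - apply NNPP; intro; apply N; eauto. }
  destruct Hb as [b Hb].
  assert (Hlt : forall s, S' s -> lt s b).
  { intros s Hs. destruct (Htri s b) as [|[E|E]]; auto.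
    - exfalso; apply Hb; exists s; subst; auto.
    - exfalso; apply Hb; exists s; auto. }
  destruct (Hst (fun y => lt b y)) as [x [Hx1 Hx2]].
  - split.
    + intros d [[y0 Hy0] _] Hcof.
      destruct (Hcof y0 Hy0) as [z (_ & Hz & Hbz)]. eauto.
    + intros x.
      destruct (Htri x b) as [Hxb|[Hxb|Hxb]].
      * destruct (above b) as [y Hy]. exists y; split; eauto.
      * subst. destruct (above b) as [y Hy]. eauto.
      * destruct (above x) as [y Hy]. exists y; split; eauto.
  - apply (Hirr b). eauto.
Qed.

End Aux.

Theorem mainTheorem16 (T : Type) (lt : T -> T -> Prop) (C : T -> T -> Prop) :
  is_omega1 lt ->
  clubsuit_seq lt C ->
  forall (n : nat) (S : T -> Prop),
    uncountable_set S ->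
    stationary lt (fun d => LimN lt C n d /\ subset (CN C n d) S).
Proof.
  intros Hom [Hlad Hcs] n. induction n as [|n IH]; intros S HS.
  - exact (Hcs S HS).
  - pose proof (stat_unc lt Hom _ (IH S HS)) as Hu.
    intros D HD. destruct (Hcs _ Hu D HD) as [x [HDx [Hlx Hsub]]].
    exists x. split; [exact HDx|]. split.
    + split; [exact Hlx|]. intros y Hy. exact (proj1 (Hsub y Hy)).
    + intros y [xi [Hxi Hy]]. exact (proj2 (Hsub xi Hxi) y Hy).
Qed.
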